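(* A quasivariety $\mathsf{K}$ has the weak ES property if and only if no finitely generated $\mathbf{B} \in \mathsf{K}$ has a proper subalgebra $\mathbf{A} \leq \mathbf{B}$ that is both almost total and epic in $\mathsf{K}$.
   Context: A quasivariety is a class of similar algebras closed under isomorphic copies, subalgebras, direct products and ultraproducts. For a class $\mathsf{K}$, a homomorphism $f\colon \mathbf{A}\to\mathbf{B}$ with $\mathbf{A},\mathbf{B}\in\mathsf{K}$ is a $\mathsf{K}$-epimorphism if for all $\mathbf{C}\in\mathsf{K}$ and homomorphisms $g,h\colon\mathbf{B}\to\mathbf{C}$, $g\circ f=h\circ f$ implies $g=h$. A quasivariety $\mathsf{K}$ has the weak ES property if every $\mathsf{K}$-epimorphism between finitely generated members of $\mathsf{K}$ is surjective. For $\mathbf{B}\in\mathsf{K}$, a subalgebra $\mathbf{A}\leq\mathbf{B}$ is epic in $\mathsf{K}$ if the inclusion map $\mathbf{A}\to\mathbf{B}$ is a $\mathsf{K}$-epimorphism, i.e., for all $\mathbf{C}\in\mathsf{K}$ and homomorphisms $g,h\colon\mathbf{B}\to\mathbf{C}$, $g{\upharpoonright}_A=h{\upharpoonright}_A$ implies $g=h$. $\mathbf{A}\leq\mathbf{B}$ is almost total if there is $b\in B$ with $B=\mathrm{Sg}^{\mathbf{B}}(A\cup\{b\})$, where $\mathrm{Sg}^{\mathbf{B}}(X)$ is the subuniverse of $\mathbf{B}$ generated by $X$. *)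

(* Defs.v *)
From Stdlib Require List.
From mathcomp Require Import all_boot.
Set Implicit Arguments. Unset Strict Implicit. Unset Printing Implicit Defensive.

Record signature := Signature { op : Type ; arity : op -> nat }.

(** Algebras of a signature; following the usual convention of universal
    algebra, carriers are nonempty. *)
Record algebra (S : signature) := Algebra {
  carrier :> Type ;
  ops : forall f : op S, ('I_(arity f) -> carrier) -> carrier ;
  carrier_inh : inhabited carrier }.
Arguments ops {S} _ f _.

Definition surjective (X Y : Type) (h : X -> Y) : Prop := forall y : Y, exists x : X, h x = y.

Section Defs.
Variable S : signature.

Definition is_hom (A B : algebra S) (h : A -> B) : Prop :=
  forall (f : op S) (a : 'I_(arity f) -> A),
    h (ops A f a) = ops B f (fun j => h (a j)).

Definition is_hom_into_prod (I : Type) (F : I -> algebra S) (C : algebra S)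
  (h : C -> forall i, F i) : Prop :=
  forall (f : op S) (a : 'I_(arity f) -> C) (i : I),
    h (ops C f a) i = ops (F i) f (fun j => h (a j) i).

Definition is_hom_from_prod (I : Type) (F : I -> algebra S) (C : algebra S)
  (h : (forall i, F i) -> C) : Prop :=
  forall (f : op S) (x : 'I_(arity f) -> forall i, F i),
    h (fun i => ops (F i) f (fun j => x j i)) = ops C f (fun j => h (x j)).

Definition ultrafilter (I : Type) (U : (I -> Prop) -> Prop) : Prop :=
  [/\ U (fun _ => True),
      ~ U (fun _ => False),
      (forall X Y : I -> Prop, U X -> (forall i, X i -> Y i) -> U Y),
      (forall X Y : I -> Prop, U X -> U Y -> U (fun i => X i /\ Y i)) &
      (forall X : I -> Prop, U X \/ U (fun i => ~ X i))].

(** A quasivariety: a class closed under isomorphic copies and subalgebras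
    (together: under embeddings), direct products and ultraproducts
    (up to isomorphism). *)
Definition quasivariety (K : algebra S -> Prop) : Prop :=
  [/\
      (forall (A B : algebra S) (h : A -> B),
          is_hom h -> injective h -> K B -> K A),
      (forall (I : Type) (F : I -> algebra S), (forall i, K (F i)) ->
        forall (C : algebra S) (h : C -> forall i, F i),
          is_hom_into_prod h -> bijective h -> K C) &
      (* P_U: C is isomorphic to the ultraproduct prod_i F i / U *)
      (forall (I : Type) (F : I -> algebra S) (U : (I -> Prop) -> Prop),
        ultrafilter U -> (forall i, K (F i)) ->
        forall (C : algebra S) (h : (forall i, F i) -> C),
          is_hom_from_prod h -> surjective h ->
          (forall x y, h x = h y <-> U (fun i => x i = y i)) -> K C)].

Definition subuniverse (B : algebra S) (X : B -> Prop) : Prop :=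
  forall (f : op S) (a : 'I_(arity f) -> B), (forall j, X (a j)) -> X (ops B f a).

Definition Sg (B : algebra S) (X : B -> Prop) : B -> Prop :=
  fun b => forall Y : B -> Prop, subuniverse Y -> (forall x, X x -> Y x) -> Y b.

Definition finitely_generated (B : algebra S) : Prop :=
  exists l : list B, forall b : B, Sg (fun x => List.In x l) b.

Definition K_epimorphism (K : algebra S -> Prop) (A B : algebra S) (h : A -> B) : Prop :=
  [/\ K A, K B, is_hom h &
     forall (C : algebra S) (g1 g2 : B -> C), K C -> is_hom g1 -> is_hom g2 ->
       (forall a, g1 (h a) = g2 (h a)) -> forall b, g1 b = g2 b].

Definition weak_ES (K : algebra S -> Prop) : Prop :=
  forall (A B : algebra S) (h : A -> B),
    finitely_generated A -> finitely_generated B ->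
    K_epimorphism K h -> surjective h.

(** Subalgebras of B are represented by their (nonempty) universes. *)
Definition subalgebra_univ (B : algebra S) (X : B -> Prop) : Prop :=
  subuniverse X /\ exists x, X x.

(** The subalgebra with universe X is epic in K (inclusion is a K-epimorphism;
    the subalgebra of B in K is itself in K when K is a quasivariety). *)
Definition epic_in (K : algebra S -> Prop) (B : algebra S) (X : B -> Prop) : Prop :=
  forall (C : algebra S) (g1 g2 : B -> C), K C -> is_hom g1 -> is_hom g2 ->
    (forall a, X a -> g1 a = g2 a) -> forall b, g1 b = g2 b.

Definition almost_total (B : algebra S) (X : B -> Prop) : Prop :=
  exists b : B, forall y : B, Sg (fun x => X x \/ x = b) y.

Definition proper_univ (B : algebra S) (X : B -> Prop) : Prop :=
  exists b : B, ~ X b.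

End Defs.

(* Main.v *)
Require Import Defs.
From mathcomp Require Import all_boot.
From Stdlib Require Import Classical ClassicalEpsilon FunctionalExtensionality ProofIrrelevance PropExtensionality.
From mathcomp Require classical_sets filter.
Module UF.
Import classical_sets filter.
Lemma ultra_exists (I : Type) (F0 : (I -> Prop) -> Prop) :
  F0 (fun _ => True) ->
  (forall X Y, F0 X -> F0 Y -> F0 (fun i => X i /\ Y i)) ->
  (forall X Y : I -> Prop, F0 X -> (forall i, X i -> Y i) -> F0 Y) ->
  (forall X, F0 X -> exists i, X i) ->
  exists U, ultrafilter U /\ forall X, F0 X -> U X.
Proof.
move=> HT HI HS Hex.
have FF : ProperFilter F0.
  apply: Build_ProperFilter_ex => //.
  split => //.
  - by move=> P Q PQ FP; apply: HS FP _.
have [G [GU sFG]] := ultraFilterLemma FF.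
exists G; split => //.
have GF : Filter G by apply: filter_filter.
split.
- exact: (@filterT _ G GF).
- exact: (@filter_not_empty _ G ultra_proper).
- by move=> X Y GX XY; apply: filterS GX.
- by move=> X Y GX GY; apply: (@filterI _ G GF).
- by move=> X; apply: in_ultra_setVsetC.
Qed.
End UF.

Set Implicit Arguments. Unset Strict Implicit. Unset Printing Implicit Defensive.


Lemma in_seq_In (T : eqType) (x : T) (s : seq T) : x \in s -> List.In x s.
Proof.
elim: s => //= y s IH; rewrite inE => /orP [/eqP ->|/IH]; auto.
Qed.

Lemma U_forall_ord (I : Type) (U : (I -> Prop) -> Prop) n (P : 'I_n -> I -> Prop) :
  ultrafilter U -> (forall j, U (P j)) -> U (fun i => forall j, P j i).
Proof.
case=> UT _ US UI _ HP.
have H : forall s : list 'I_n, U (fun i => forall j, List.In j s -> P j i).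
  elim=> [|j s IH] /=.
    by apply: (US _ _ UT) => i _ j [].
  apply: (US _ _ (UI _ _ (HP j) IH)) => i [Hj Hs] k [<-|Hk]; auto.
apply: (US _ _ (H (enum 'I_n))) => i Hi j; apply: Hi; apply: in_seq_In; by rewrite mem_enum.
Qed.

Section Ultra.
Variables (S : signature) (I : Type) (F : I -> algebra S) (U : (I -> Prop) -> Prop).
Hypothesis HU : ultrafilter U.
Definition Pi := forall i, F i.
Definition eqU (x y : Pi) := U (fun i => x i = y i).
Lemma eqU_refl x : eqU x x.
Proof. case: HU => UT _ US _ _; by apply: (US _ _ UT). Qed.
Lemma eqU_sym x y : eqU x y -> eqU y x.
Proof. rewrite /eqU; case: HU => UT _ US _ _ H; by apply: (US _ _ H). Qed.
Lemma eqU_trans x y z : eqU x y -> eqU y z -> eqU x z.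
Proof. rewrite /eqU; case: HU => UT _ US UI _ H1 H2; apply: (US _ _ (UI _ _ H1 H2)) => i [-> ->] //. Qed.
Definition cls (x : Pi) : Pi -> Prop := fun y => eqU x y.
Lemma cls_eq x y : eqU x y -> cls x = cls y.
Proof.
move=> H; apply: functional_extensionality => z; apply: propositional_extensionality.
split => Hz; rewrite /cls in Hz *.
  exact: eqU_trans (eqU_sym H) Hz.
exact: eqU_trans H Hz.
Qed.
Lemma cls_inj x y : cls x = cls y -> eqU x y.
Proof. move=> H; have : cls y y := eqU_refl y. by rewrite -H. Qed.
Definition Q := {P : Pi -> Prop | exists x, P = cls x}.
Definition qq (x : Pi) : Q := exist _ (cls x) (ex_intro _ x erefl).
Definition rep (c : Q) : Pi := proj1_sig (constructive_indefinite_description _ (proj2_sig c)).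
Lemma rep_spec c : proj1_sig c = cls (rep c).
Proof. rewrite /rep; case: constructive_indefinite_description => //. Qed.
Lemma qq_rep c : qq (rep c) = c.
Proof.
apply: eq_sig_hprop => /=; first by move=> *; apply: proof_irrelevance.
exact: (esym (rep_spec c)).
Qed.
Lemma qq_eq x y : qq x = qq y <-> eqU x y.
Proof.
split => [H|H]; first by apply: cls_inj; exact: (f_equal (@proj1_sig _ _) H).
apply: eq_sig_hprop => /=; first by move=> *; apply: proof_irrelevance.
exact: cls_eq.
Qed.
Definition opsQ (f : op S) (c : 'I_(arity f) -> Q) : Q :=
  qq (fun i => ops (F i) f (fun j => rep (c j) i)).
Lemma Pi_inh : inhabited Pi.
Proof.
constructor => i.
have /constructive_indefinite_description [x _] : exists x : F i, True.
  by case: (carrier_inh (F i)) => x; exists x.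
exact: x.
Qed.
Lemma Q_inh : inhabited Q.
Proof. case: Pi_inh => x; exact: (inhabits (qq x)). Qed.
Definition QA : algebra S := @Algebra S Q opsQ Q_inh.
Lemma qq_hom : is_hom_from_prod (C:=QA) qq.
Proof.
move=> f x /=; rewrite /opsQ; apply/qq_eq.
have Hj : forall j, U (fun i => x j i = rep (qq (x j)) i).
  by move=> j; apply: cls_inj; rewrite -rep_spec.
case: HU => _ _ US _ _.
apply: (US _ _ (U_forall_ord HU Hj)) => i Hi; congr (ops (F i) f); apply: functional_extensionality => j; exact: Hi.
Qed.
Lemma qq_surj : surjective (qq : Pi -> QA).
Proof. by move=> c; exists (rep c); exact: qq_rep. Qed.
Lemma qq_hom_comp (B : algebra S) (G : forall i, B -> F i) :
  (forall i, is_hom (G i)) -> is_hom (B:=QA) (fun b => qq (fun i => G i b)).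
Proof.
move=> HG f a.
have -> : (fun i => G i (ops B f a)) = (fun i => ops (F i) f (fun j => G i (a j))).
  by apply: functional_extensionality_dep => i; apply: HG.
exact: (qq_hom (fun j i => G i (a j))).
Qed.
Lemma QA_in_K (K : algebra S -> Prop) : quasivariety K -> (forall i, K (F i)) -> K QA.
Proof.
case=> _ _ HPU HF; apply: (HPU I F U HU HF QA qq qq_hom qq_surj) => x y; exact: qq_eq.
Qed.
End Ultra.

Section Gen.
Variable S : signature.

Lemma Sg_sub (B : algebra S) (X : B -> Prop) : subuniverse (Sg X).
Proof. move=> f a H; rewrite /Sg => Y HY HXY; apply: (HY) => j; exact: (H j Y HY HXY). Qed.
Lemma Sg_incl (B : algebra S) (X : B -> Prop) x : X x -> Sg X x.
Proof. by move=> Hx; rewrite /Sg => Y _ H; apply: H. Qed.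
Lemma Sg_min (B : algebra S) (X Y : B -> Prop) :
  subuniverse Y -> (forall x, X x -> Y x) -> forall x, Sg X x -> Y x.
Proof. by move=> HY HXY x Hx; apply: Hx. Qed.

Lemma eq_sub (B C : algebra S) (g1 g2 : B -> C) :
  is_hom g1 -> is_hom g2 -> subuniverse (fun b => g1 b = g2 b).
Proof.
move=> h1 h2 f a Ha; rewrite h1 h2; congr (ops C f).
by apply: functional_extensionality => j; apply: Ha.
Qed.

Lemma extend_lemma (B : algebra S) (l : list B) : forall X : B -> Prop,
  subuniverse X -> (exists b, ~ X b) ->
  (forall y, Sg (fun x => X x \/ List.In x l) y) ->
  exists Y : B -> Prop, [/\ subuniverse Y, (forall x, X x -> Y x),
    (exists b, ~ Y b) & almost_total Y].
Proof.
elim: l => [|c l IH] X HX [b0 Hb0] Hgen.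
  exfalso; apply: Hb0; move: (Hgen b0); apply: Sg_min => // x [] //.
have [[b1 Hb1]|Hall] := classic (exists b, ~ Sg (fun x => X x \/ x = c) b).
  have Hg : forall y, Sg (fun x => Sg (fun x => X x \/ x = c) x \/ List.In x l) y.
    move=> y; move: (Hgen y); apply: Sg_min; first exact: Sg_sub.
    move => x [Hx|/= [Hx|Hx]].
    + by apply: Sg_incl; left; apply: Sg_incl; left.
    + by apply: Sg_incl; left; apply: Sg_incl; right.
    + by apply: Sg_incl; right.
  have [Y [HY1 HY2 HY3 HY4]] := IH _ (@Sg_sub B (fun x => X x \/ x = c)) (ex_intro _ b1 Hb1) Hg.
  exists Y; split => // x Hx; apply: HY2; apply: Sg_incl; by left.
exists X; split => //; first by exists b0.
exists c => y; apply: NNPP => Hy; apply: Hall; by exists y.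
Qed.
End Gen.

Lemma dir2 (S : signature) (K : algebra S -> Prop) :
  (~ exists B : algebra S, K B /\ finitely_generated B /\
       exists X : B -> Prop,
         subalgebra_univ X /\ proper_univ X /\ almost_total X /\ epic_in K X) ->
  weak_ES K.
Proof.
move=> Hno A B h _ [gs Hgs] [KA KB hh Hepi].
apply: NNPP => Hns.
have [b0 Hb0] : exists b0, forall a, h a <> b0.
  apply: NNPP => H; apply: Hns => b; apply: NNPP => Hb; apply: H; exists b => a e.
  by apply: Hb; exists a.
pose Im := fun b => exists a, h a = b.
have HIm : subuniverse Im.
  move=> f a Ha.
  pose x j := proj1_sig (constructive_indefinite_description _ (Ha j)).
  exists (ops A f x); rewrite hh; congr (ops B f).
  apply: functional_extensionality => j; rewrite /x.
  by case: constructive_indefinite_description.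
have [Y [HY1 HY2 HY3 HY4]] := extend_lemma (l := gs) HIm (ex_intro _ b0 (fun H => let: ex_intro a e := H in Hb0 a e)) 
  (fun y => Sg_min (@Sg_sub S B _) (fun x Hx => Sg_incl (or_intror Hx)) (Hgs y)).
apply: Hno; exists B; split => //; split; first by exists gs.
exists Y; split; last split => //; last split => //.
  split => //; case: (carrier_inh A) => a0; exists (h a0); apply: HY2; by exists a0.
move=> C g1 g2 KC h1 h2 Hag; apply: Hepi => // a; apply: Hag; apply: HY2; by exists a.
Qed.

Lemma compact (S : signature) (K : algebra S -> Prop) (HK : quasivariety K)
  (B : algebra S) (X : B -> Prop) (Hep : epic_in K X) (b : B) :
  exists l, (forall x, List.In x l -> X x) /\
    forall (C : algebra S) (g1 g2 : B -> C), K C -> is_hom g1 -> is_hom g2 ->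
      (forall x, List.In x l -> g1 x = g2 x) -> g1 b = g2 b.
Proof.
apply: NNPP => Hn.
pose I := {l : list B | forall x, List.In x l -> X x}.
have Hbad : forall i : I, exists p : {C : algebra S & ((B -> C) * (B -> C))%type},
    [/\ K (projT1 p), is_hom (projT2 p).1, is_hom (projT2 p).2,
        (forall x, List.In x (sval i) -> (projT2 p).1 x = (projT2 p).2 x) &
        (projT2 p).1 b <> (projT2 p).2 b].
  move=> [l Hl]; apply: NNPP => Hne; apply: Hn; exists l; split => //.
  move=> C g1 g2 KC h1 h2 Hag; apply: NNPP => Hneq; apply: Hne.
  by exists (existT _ C (g1, g2)).
pose pick i := proj1_sig (constructive_indefinite_description _ (Hbad i)).
have spec i := proj2_sig (constructive_indefinite_description _ (Hbad i)).
pose F i := projT1 (pick i).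
pose G1 i : B -> F i := (projT2 (pick i)).1.
pose G2 i : B -> F i := (projT2 (pick i)).2.
pose F0 := fun Z : I -> Prop => exists l0, (forall x, List.In x l0 -> X x) /\
   forall i : I, (forall x, List.In x l0 -> List.In x (sval i)) -> Z i.
have [U [HU HFU]] : exists U, ultrafilter U /\ forall Z, F0 Z -> U Z.
  apply: UF.ultra_exists.
  - by exists nil; split.
  - move=> Z1 Z2 [l1 [H1 H1']] [l2 [H2 H2']]; exists (l1 ++ l2); split.
      by move=> x Hx; case: (List.in_app_or _ _ _ Hx) => ?; [apply: H1|apply: H2].
    by move=> i Hi; split; [apply: H1'|apply: H2'] => x Hx; apply: Hi;
      apply: List.in_or_app; auto.
  - by move=> Z1 Z2 [l1 [H1 H1']] HZ; exists l1; split => // i Hi; apply: HZ; apply: H1'.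
  - by move=> Z [l1 [H1 H1']]; exists (exist _ l1 H1); apply: H1'.
have KF : forall i, K (F i) by move=> i; case: (spec i).
have h1 : forall i, is_hom (G1 i) by move=> i; case: (spec i).
have h2 : forall i, is_hom (G2 i) by move=> i; case: (spec i).
have KC := QA_in_K HU HK KF.
have Heq := Hep _ _ _ KC (qq_hom_comp HU h1) (qq_hom_comp HU h2).
have Hb1 : qq U (fun i => G1 i b) = qq U (fun i => G2 i b).
  apply: Heq => x Hx; apply/(qq_eq HU); apply: HFU; exists [:: x]; split.
    by move=> y [<-|[]].
  move=> i Hi; have [_ _ _ Hag _] := spec i; apply: Hag; apply: Hi; by left.
have HUb := proj1 (qq_eq HU _ _) Hb1.
case: HU => _ HnF US _ _; apply: HnF; apply: (US _ _ HUb) => i.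
by case: (spec i).
Qed.

Definition subalg (S : signature) (B : algebra S) (Y : B -> Prop) (HY : subuniverse Y)
  (y0 : B) (Hy0 : Y y0) : algebra S :=
  @Algebra S {b : B | Y b}
    (fun f a => exist _ (ops B f (fun j => sval (a j))) (HY f _ (fun j => proj2_sig (a j))))
    (inhabits (exist _ y0 Hy0)).

Lemma sval_inj (T : Type) (P : T -> Prop) : injective (@proj1_sig T P).
Proof.
move=> [x p] [y q] /= e; subst y; congr exist; exact: proof_irrelevance.
Qed.

Lemma subalg_fg (S : signature) (B : algebra S) (Y : B -> Prop) (HY : subuniverse Y)
  (y0 : B) (Hy0 : Y y0) (l : list B) :
  (forall b, Y b -> Sg (fun x => List.In x l) b) -> (forall x, List.In x l -> Y x) ->
  finitely_generated (subalg HY Hy0).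
Proof.
move=> HgenY HlY.
have [lA HlA] : exists lA : list (subalg HY Hy0), map (@proj1_sig _ _) lA = l.
  elim: l HlY {HgenY} => [|c l IH] Hl; first by exists nil.
  have [lA HlA] := IH (fun x Hx => Hl x (or_intror Hx)).
  by exists (exist _ c (Hl c (or_introl erefl)) :: lA); rewrite /= HlA.
exists lA => a Y' HY' Hincl.
pose P b := Y b /\ forall p : Y b, Y' (exist _ b p).
have HP : subuniverse P.
  move=> f a' Ha'; split; first by apply: (HY) => j; case: (Ha' j).
  move=> p.
  pose a'' : 'I_(arity f) -> subalg HY Hy0 := fun j => exist _ (a' j) (proj1 (Ha' j)).
  have := HY' f a'' (fun j => proj2 (Ha' j) _).
  have -> : ops (subalg HY Hy0) f a'' = exist _ (ops B f a') p.
    by apply: sval_inj.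
  by [].
have HlP : forall x, List.In x l -> P x.
  move=> x Hx; split; first exact: HlY.
  move=> q; apply: Hincl.

move: Hx; rewrite -HlA => /List.in_map_iff [a1 [e Ha1]].
  by have -> : exist _ x q = a1 by apply: sval_inj.
case: a => b p; have [_ ] := Sg_min HP HlP (HgenY b p); by apply.
Qed.

Lemma dir1 (S : signature) (K : algebra S -> Prop) : quasivariety K ->
  weak_ES K ->
  ~ exists B : algebra S, K B /\ finitely_generated B /\
       exists X : B -> Prop,
         subalgebra_univ X /\ proper_univ X /\ almost_total X /\ epic_in K X.
Proof.
move=> HK Hwes [B [KB [[gs Hgs] [X [[HXs [x0 Hx0]] [[bp Hbp] [_ Hep]]]]]]].
have [L [HL HLe]] : exists L, (forall x, List.In x L -> X x) /\
   forall (C : algebra S) (g1 g2 : B -> C), K C -> is_hom g1 -> is_hom g2 ->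
   (forall x, List.In x L -> g1 x = g2 x) -> forall b, List.In b gs -> g1 b = g2 b.
  elim: gs {Hgs} => [|c gs [L [HL HLe]]]; first by exists nil; split => // *.
  have [lc [Hlc Hlce]] := compact HK Hep c.
  exists (lc ++ L); split.
    by move=> x Hx; case: (List.in_app_or _ _ _ Hx); [apply: Hlc|apply: HL].
  move=> C g1 g2 KC h1 h2 Hag b [<-|Hb].
    by apply: Hlce => // x Hx; apply: Hag; apply: List.in_or_app; left.
  by apply: (HLe C) => // x Hx; apply: Hag; apply: List.in_or_app; right.
pose l' := x0 :: L.
pose Y := Sg (fun x => List.In x l').
have HYs : subuniverse Y := @Sg_sub S B _.
have Hy0 : Y x0 by apply: Sg_incl; left.
have Hl'X : forall x, List.In x l' -> X x by move=> x [<-|Hx] //; apply: HL.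
have HYX : forall y, Y y -> X y by move=> y; apply: Sg_min.
have HYep : forall (C : algebra S) (g1 g2 : B -> C), K C -> is_hom g1 -> is_hom g2 ->
    (forall a, Y a -> g1 a = g2 a) -> forall b, g1 b = g2 b.
  move=> C g1 g2 KC h1 h2 Hag b.
  have Hgs' := HLe C g1 g2 KC h1 h2 (fun x Hx => Hag x (Sg_incl (or_intror Hx))).
  exact: (Sg_min (eq_sub h1 h2) Hgs' (Hgs b)).
pose A := subalg HYs Hy0.
have fgA : finitely_generated A.
  by apply: (@subalg_fg S B Y HYs x0 Hy0 l') => // x Hx; apply: Sg_incl.
have hA : is_hom (@proj1_sig B Y : A -> B) by [].
have KA : K A by case: HK => HKs _ _; apply: (HKs A B _ hA (@sval_inj _ _) KB).
have Hsurj : surjective (@proj1_sig B Y : A -> B).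
  apply: Hwes => //; first by exists gs.
  split => // C g1 g2 KC h1 h2 Hag; apply: HYep => // a Ha.
  exact: (Hag (exist _ a Ha)).
case: (Hsurj bp) => [[b' Hb'] /= e]; subst b'.
by apply: Hbp; apply: HYX.
Qed.

Theorem mainTheorem1 (S : signature) (K : algebra S -> Prop) :
  quasivariety K ->
  (weak_ES K <->
   ~ exists B : algebra S, K B /\ finitely_generated B /\
       exists X : B -> Prop,
         subalgebra_univ X /\ proper_univ X /\ almost_total X /\ epic_in K X).
Proof.
move=> HK; split; [exact: dir1|exact: dir2].
Qed.
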